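(* For any preference profile with $n$ men and $n$ women, any stable matching contains at most one hell-couple.
   Context: Each of $n$ men strictly ranks the $n$ women by a bijection to $\{1,\dots,n\}$ (1 = favorite, $n$ = least favorite), and each woman strictly ranks the $n$ men likewise. A matching is a perfect pairing of men with women. A matching is stable if there is no man $M$ and woman $W$, not matched to each other, such that $M$ prefers $W$ to his partner and $W$ prefers $M$ to her partner. A hell-pair is a man and a woman who rank each other $n$ (last); a hell-couple in a matching is a hell-pair who are matched to each other. *)

(* Defs.v *)
From mathcomp Require Import all_boot all_fingroup.
Set Implicit Arguments. Unset Strict Implicit. Unset Printing Implicit Defensive.

(* A ranking is a bijection
   'I_n -> 'I_n ({perm 'I_n}); the value k : 'I_n stands for the rank k+1,
   so rank 1 (favourite) is 0 and rank n (least favourite) is n.-1. *)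

Record profile (n : nat) := Profile {
  mrank : 'I_n -> {perm 'I_n};
  wrank : 'I_n -> {perm 'I_n}
}.

Definition matching (n : nat) := {perm 'I_n}.

Definition mprefers n (P : profile n) (m w w' : 'I_n) : bool :=
  (nat_of_ord (mrank P m w) < nat_of_ord (mrank P m w'))%N.
Definition wprefers n (P : profile n) (w m m' : 'I_n) : bool :=
  (nat_of_ord (wrank P w m) < nat_of_ord (wrank P w m'))%N.

Definition blocking_pair n (P : profile n) (mu : matching n) (m w : 'I_n) : bool :=
  [&& mu m != w, mprefers P m w (mu m) & wprefers P w m ((mu^-1)%g w)].

Definition stable n (P : profile n) (mu : matching n) : Prop :=
  forall m w : 'I_n, ~~ blocking_pair P mu m w.

Definition hell_pair n (P : profile n) (m w : 'I_n) : bool :=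
  (nat_of_ord (mrank P m w) == n.-1) && (nat_of_ord (wrank P w m) == n.-1).

Definition hell_couple n (P : profile n) (mu : matching n) (m : 'I_n) : bool :=
  hell_pair P m (mu m).

(* Main.v *)
Require Import Defs.
From mathcomp Require Import all_boot all_fingroup.

Lemma lt_last n (s : {perm 'I_n}) (a b : 'I_n) :
  nat_of_ord (s b) = n.-1 -> a != b -> (nat_of_ord (s a) < nat_of_ord (s b))%N.
Proof.
move=> hb hab; rewrite hb.
have hne : s a != s b by rewrite (inj_eq perm_inj).
have : nat_of_ord (s a) != nat_of_ord (s b) by [].
rewrite hb; have := ltn_ord (s a); case: n s a b hb hab hne => [|k] s a b _ _ _ /=.
  by case: a.
by rewrite ltnS leq_eqVlt => /orP [->|].
Qed.

Theorem mainTheorem6 (n : nat) (P : profile n) (mu : matching n) :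
  stable P mu -> (#|[set m : 'I_n | hell_couple P mu m]| <= 1)%N.
Proof.
move=> st; rewrite leqNgt; apply/negP => /card_gt1P [m1 [m2 [h1 h2 ne]]].
move: h1 h2; rewrite !inE /hell_couple /hell_pair => /andP [/eqP a1 /eqP b1] /andP [/eqP a2 /eqP b2].
have wne : mu m1 != mu m2 by rewrite (inj_eq perm_inj).
apply: (negP (st m1 (mu m2))).
rewrite /blocking_pair wne /mprefers /wprefers permK /=.
apply/andP; split.
  by apply: lt_last => //; rewrite eq_sym.
by apply: lt_last.
Qed.
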